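(* Let $(A;A^+)$ be an $\mathbb{F}_1$-algebra pair and $(M,\le)$ a partially ordered $A$-module whose underlying $A$-module $M$ is projective. Then the $\mathbb{B}[A;A^+]$-module $\mathbb{B}(M,\le)$ is projective if and only if: (i) (lower finite) the downward closure (lower hull) of any finitely generated $A^+$-submodule of $M$ is a finitely generated $A^+$-submodule; and (ii) (lower saturated) if $D\subseteq M$ is an $A^+$-submodule which is a lower set, then $fD=\{fx:x\in D\}$ is a lower set for every $f\in A$.
   Context: An $\mathbb{F}_1$-algebra pair $(A;A^+)$ consists of a commutative monoid with zero $A$ (written multiplicatively) and a submonoid $A^+\subseteq A$ containing $0$; $A^+$ is assumed sharp (its only invertible element is $1$). An $A$-module is a pointed set (base point $0$) with an action of $A$ where $0\in A$ sends everything to $0$ and $0$ is fixed; an $A^+$-submodule of $M$ is a subset containing $0$ stable under $A^+$. $\mathbb{B}[A;A^+]$ is the idempotent semiring of finitely generated $A^+$-submodules of $A$, with $\vee$ = union and $+$ = elementwise product; $A$ acts on $\mathbb{B}[A;A^+]$-modules through $a\mapsto A^+a$. A partially ordered $A$-module is an $A$-module $M$ with a partial order such that (a) $fv\le gv$ for all $v\in M$, $g\in A$, $f\in A^+g$, and (b) $v\le w$ implies $fv\le fw$ for all $f\in A$. $\mathbb{B}(M,\le)$ is the set of $A^+$-submodules of $M$ that are lower sets and are the downward closure of a finitely generated $A^+$-submodule; it is a $\mathbb{B}[A;A^+]$-module under union and elementwise multiplication (the free $\mathbb{B}[A;A^+]$-module on $(M,\le)$). A module is projective if every surjection onto it has a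 section. *)

(* Defs.v *)
From Stdlib Require Import List.
Import ListNotations.

Record F1Pair := {
  F1c :> Type;
  F1mul : F1c -> F1c -> F1c;
  F1one : F1c;
  F1zero : F1c;
  F1mulA : forall a b c, F1mul a (F1mul b c) = F1mul (F1mul a b) c;
  F1mulC : forall a b, F1mul a b = F1mul b a;
  F1mul1 : forall a, F1mul F1one a = a;
  F1mul0 : forall a, F1mul F1zero a = F1zero;
  F1plus : F1c -> Prop;
  F1plus0 : F1plus F1zero;
  F1plus1 : F1plus F1one;
  F1plusM : forall a b, F1plus a -> F1plus b -> F1plus (F1mul a b);
  F1plus_sharp : forall a b, F1plus a -> F1plus b -> F1mul a b = F1one -> a = F1one }.

Arguments F1mul {f} _ _.
Arguments F1one {f}.
Arguments F1zero {f}.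
Arguments F1plus {f} _.
Arguments F1mulA {f} _ _ _.
Arguments F1mulC {f} _ _.
Arguments F1mul1 {f} _.
Arguments F1mul0 {f} _.

Record AMod (A : F1Pair) := {
  Mc :> Type;
  Mpt : Mc;
  Mact : A -> Mc -> Mc;
  Mact1 : forall m, Mact F1one m = m;
  MactM : forall a b m, Mact (F1mul a b) m = Mact a (Mact b m);
  Mact0 : forall m, Mact F1zero m = Mpt;
  Mactpt : forall a, Mact a Mpt = Mpt }.

Arguments Mpt {A} _.
Arguments Mact {A} _ _ _.
Arguments Mact1 {A} _ _.
Arguments MactM {A} _ _ _ _.
Arguments Mact0 {A} _ _.
Arguments Mactpt {A} _ _.

Definition AMod_hom {A : F1Pair} {M N : AMod A} (f : M -> N) : Prop :=
  f (Mpt M) = Mpt N /\ forall a m, f (Mact M a m) = Mact N a (f m).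

Definition AMod_projective {A : F1Pair} (M : AMod A) : Prop :=
  forall (N : AMod A) (p : N -> M), AMod_hom p -> (forall m, exists n, p n = m) ->
  exists s : M -> N, AMod_hom s /\ forall m, p (s m) = m.

Definition submod {A : F1Pair} {M : AMod A} (S : M -> Prop) : Prop :=
  S (Mpt M) /\ forall f x, F1plus f -> S x -> S (Mact M f x).

Definition gen {A : F1Pair} {M : AMod A} (l : list M) (x : M) : Prop :=
  x = Mpt M \/ exists g f, In g l /\ F1plus f /\ x = Mact M f g.

Definition fgsub {A : F1Pair} {M : AMod A} (S : M -> Prop) : Prop :=
  exists l : list M, forall x, S x <-> gen l x.

Record POMod (A : F1Pair) := {
  pmod :> AMod A;
  ple : pmod -> pmod -> Prop;
  ple_refl : forall x, ple x x;
  ple_trans : forall x y z, ple x y -> ple y z -> ple x z;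
  ple_antisym : forall x y, ple x y -> ple y x -> x = y;
  ple_a : forall (v : pmod) (g f : A),
      (exists h, F1plus h /\ f = F1mul h g) -> ple (Mact _ f v) (Mact _ g v);
  ple_b : forall (v w : pmod) (f : A), ple v w -> ple (Mact _ f v) (Mact _ f w) }.

Arguments ple {A} _ _ _.
Arguments pmod {A} _.

Definition lower_set {A : F1Pair} {M : POMod A} (S : M -> Prop) : Prop :=
  forall x y, ple M x y -> S y -> S x.

Definition down {A : F1Pair} {M : POMod A} (S : M -> Prop) (x : M) : Prop :=
  exists y, S y /\ ple M x y.

Definition inBM {A : F1Pair} {M : POMod A} (S : M -> Prop) : Prop :=
  submod (M := M) S /\ lower_set S /\
  exists T : M -> Prop, fgsub (M := M) T /\ forall x, S x <-> down T x.

Definition lower_finite {A : F1Pair} (M : POMod A) : Prop :=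
  forall T : M -> Prop, fgsub (M := M) T -> fgsub (M := M) (down T).

Definition lower_saturated {A : F1Pair} (M : POMod A) : Prop :=
  forall D : M -> Prop, submod (M := M) D -> lower_set D ->
  forall f : A, lower_set (fun x : M => exists y, D y /\ x = Mact M f y).

Definition genA {A : F1Pair} (l : list A) (a : A) : Prop :=
  a = F1zero \/ exists g f, In g l /\ F1plus f /\ a = F1mul f g.

Record BA (A : F1Pair) := {
  baP :> A -> Prop;
  baFG : exists l : list A, forall a, baP a <-> genA l a }.

Arguments baP {A} _ _.
Arguments baFG {A} _.

Definition BAzero (A : F1Pair) : BA A :=
  {| baP := genA nil; baFG := ex_intro _ nil (fun a => iff_refl _) |}.

Definition BAone (A : F1Pair) : BA A :=
  {| baP := genA [F1one]; baFG := ex_intro _ [F1one] (fun a => iff_refl _) |}.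

Lemma genA_app {A : F1Pair} (l1 l2 : list A) a :
  genA (l1 ++ l2) a <-> genA l1 a \/ genA l2 a.
Proof. unfold genA; setoid_rewrite in_app_iff; firstorder. Qed.

Lemma BAjoin_fg {A : F1Pair} (I J : BA A) :
  exists l : list A, forall a, (I a \/ J a) <-> genA l a.
Proof.
  destruct (baFG I) as [l1 H1]; destruct (baFG J) as [l2 H2].
  exists (l1 ++ l2); intro a; rewrite genA_app, H1, H2; tauto.
Qed.

Definition BAjoin {A : F1Pair} (I J : BA A) : BA A :=
  {| baP := fun a => I a \/ J a; baFG := BAjoin_fg I J |}.

Lemma BAmul_fg {A : F1Pair} (I J : BA A) :
  exists l : list A, forall a,
    (exists i j, I i /\ J j /\ a = F1mul i j) <-> genA l a.
Proof.
  destruct (baFG I) as [l1 H1]; destruct (baFG J) as [l2 H2].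
  exists (flat_map (fun g => map (fun g' => F1mul g g') l2) l1).
  intro a; split.
  - intros [i [j [Hi [Hj ->]]]].
    apply H1 in Hi; apply H2 in Hj.
    destruct Hi as [-> | [g [f [Hg [Hf ->]]]]].
    + left; apply F1mul0.
    + destruct Hj as [-> | [g' [f' [Hg' [Hf' ->]]]]].
      * left; rewrite F1mulC; apply F1mul0.
      * right; exists (F1mul g g'), (F1mul f f'); repeat split.
        -- apply in_flat_map; exists g; split; [exact Hg|].
           apply in_map_iff; exists g'; split; [reflexivity | exact Hg'].
        -- apply F1plusM; assumption.
        -- rewrite <- !F1mulA; f_equal.
           rewrite !F1mulA, (F1mulC g f'); reflexivity.
  - intros [-> | [w [f [Hw [Hf ->]]]]].
    + exists F1zero, F1zero; repeat split.
      * apply H1; left; reflexivity.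
      * apply H2; left; reflexivity.
      * symmetry; apply F1mul0.
    + apply in_flat_map in Hw; destruct Hw as [g [Hg Hw]].
      apply in_map_iff in Hw; destruct Hw as [g' [<- Hg']].
      exists (F1mul f g), (F1mul F1one g'); repeat split.
      * apply H1; right; exists g, f; auto.
      * apply H2; right; exists g', F1one; repeat split; auto. apply F1plus1.
      * rewrite F1mul1, F1mulA; reflexivity.
Qed.

Definition BAmul {A : F1Pair} (I J : BA A) : BA A :=
  {| baP := fun a => exists i j, I i /\ J j /\ a = F1mul i j;
     baFG := BAmul_fg I J |}.

Record BStr (A : F1Pair) := {
  bs :> Type;
  bz : bs;
  bj : bs -> bs -> bs;
  bact : BA A -> bs -> bs }.

Arguments bz {A} _.
Arguments bj {A} _ _ _.
Arguments bact {A} _ _ _.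

Definition BModAx {A : F1Pair} (N : BStr A) : Prop :=
  (forall x y z, bj N x (bj N y z) = bj N (bj N x y) z) /\
  (forall x y, bj N x y = bj N y x) /\
  (forall x, bj N (bz N) x = x) /\
  (forall I J x, bact N (BAjoin I J) x = bj N (bact N I x) (bact N J x)) /\
  (forall I x y, bact N I (bj N x y) = bj N (bact N I x) (bact N I y)) /\
  (forall I J x, bact N (BAmul I J) x = bact N I (bact N J x)) /\
  (forall x, bact N (BAone A) x = x) /\
  (forall x, bact N (BAzero A) x = bz N) /\
  (forall I, bact N I (bz N) = bz N).

Record BMod (A : F1Pair) := {
  bstr :> BStr A;
  bax : BModAx bstr }.

Definition BMod_hom {A : F1Pair} {N P : BStr A} (f : N -> P) : Prop :=
  f (bz N) = bz P /\
  (forall x y, f (bj N x y) = bj P (f x) (f y)) /\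
  (forall I x, f (bact N I x) = bact P I (f x)).

Definition BMod_projective {A : F1Pair} (P : BStr A) : Prop :=
  forall (N : BMod A) (p : N -> P), BMod_hom p -> (forall y, exists x, p x = y) ->
  exists s : P -> N, BMod_hom s /\ forall y, p (s y) = y.

Section BM.
Variable A : F1Pair.
Variable M : POMod A.

Lemma inBM_ext (S S' : M -> Prop) :
  (forall x, S x <-> S' x) -> inBM S -> inBM S'.
Proof.
  intros E [[H0 H1] [H2 [T [HT HS]]]]; repeat split.
  - apply E; exact H0.
  - intros f x Hf Hx; apply E; apply H1; [exact Hf | apply E; exact Hx].
  - intros x y Hxy Hy; apply E; apply (H2 x y Hxy); apply E; exact Hy.
  - exists T; split; [exact HT|]. intro x; rewrite <- E; apply HS.
Qed.

Lemma inBM_down_gen (l : list M) : inBM (down (gen l)).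
Proof.
  repeat split.
  - exists (Mpt M); split; [left; reflexivity | apply ple_refl].
  - intros f x Hf [y [Hy Hxy]]; exists (Mact M f y); split.
    + destruct Hy as [-> | [g [f' [Hg [Hf' ->]]]]].
      * left; apply Mactpt.
      * right; exists g, (F1mul f f'); repeat split; auto.
        -- apply F1plusM; assumption.
        -- symmetry; apply MactM.
    + apply ple_b; exact Hxy.
  - intros x y Hxy [z [Hz Hyz]]; exists z; split; [exact Hz|].
    eapply ple_trans; eassumption.
  - exists (gen l); split; [exists l; intro; reflexivity | intro; reflexivity].
Qed.

Lemma inBM_repr (S : M -> Prop) :
  inBM S -> exists l, forall x, S x <-> down (gen l) x.
Proof.
  intros [_ [_ [T [[l Hl] HS]]]]; exists l; intro x; rewrite HS.
  unfold down; split; intros [y [Hy Hle]]; exists y; split; auto; apply Hl; auto.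
Qed.

Lemma gen_app (l1 l2 : list M) x : gen (l1 ++ l2) x <-> gen l1 x \/ gen l2 x.
Proof. unfold gen; setoid_rewrite in_app_iff; firstorder. Qed.

Definition BMcar := { S : M -> Prop | inBM S }.

Definition BMzero : BMcar := exist _ (down (gen nil)) (inBM_down_gen nil).

Lemma BMjoin_in (S T : BMcar) : inBM (fun x => proj1_sig S x \/ proj1_sig T x).
Proof.
  destruct S as [S HS], T as [T HT]; simpl.
  destruct (inBM_repr _ HS) as [l1 E1]; destruct (inBM_repr _ HT) as [l2 E2].
  apply (@inBM_ext (down (gen (l1 ++ l2)))); [|apply inBM_down_gen].
  intro x; rewrite E1, E2; unfold down; setoid_rewrite gen_app; firstorder.
Qed.

Definition BMjoin (S T : BMcar) : BMcar := exist _ _ (BMjoin_in S T).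

Lemma BMact_in (I : BA A) (S : BMcar) :
  inBM (down (fun x => exists i y, I i /\ proj1_sig S y /\ x = Mact M i y)).
Proof.
  destruct S as [S HS]; simpl.
  destruct (inBM_repr _ HS) as [l2 E2]; destruct (baFG I) as [l1 H1].
  apply (@inBM_ext (down (gen (flat_map (fun g => map (fun m => Mact M g m) l2) l1))));
    [|apply inBM_down_gen].
  intro x; split.
  - intros [z [Hz Hxz]]; exists z; split; [|exact Hxz].
    destruct Hz as [-> | [w [f [Hw [Hf ->]]]]].
    + exists F1zero, (Mpt M); repeat split.
      * apply H1; left; reflexivity.
      * apply E2; exists (Mpt M); split; [left; reflexivity | apply ple_refl].
      * symmetry; apply Mact0.
    + apply in_flat_map in Hw; destruct Hw as [g [Hg Hw]].
      apply in_map_iff in Hw; destruct Hw as [g' [<- Hg']].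
      exists (F1mul f g), g'; repeat split.
      * apply H1; right; exists g, f; auto.
      * apply E2; exists g'; split; [|apply ple_refl].
        right; exists g', F1one; repeat split; auto.
        -- apply F1plus1.
        -- symmetry; apply Mact1.
      * symmetry; apply MactM.
  - intros [p [[i [y [Hi [Hy ->]]]] Hxp]].
    apply E2 in Hy; destruct Hy as [m [Hm Hym]].
    exists (Mact M i m); split.
    + apply H1 in Hi; destruct Hi as [-> | [g [f [Hg [Hf ->]]]]].
      * left; apply Mact0.
      * destruct Hm as [-> | [g' [f' [Hg' [Hf' ->]]]]].
        -- left; apply Mactpt.
        -- right; exists (Mact M g g'), (F1mul f f'); repeat split.
           ++ apply in_flat_map; exists g; split; [exact Hg|].
              apply in_map_iff; exists g'; split; [reflexivity | exact Hg'].
           ++ apply F1plusM; assumption.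
           ++ rewrite <- !MactM; f_equal.
              rewrite <- !F1mulA, (F1mulC g f'); reflexivity.
    + eapply ple_trans; [exact Hxp | apply ple_b; exact Hym].
Qed.

Definition BMact (I : BA A) (S : BMcar) : BMcar := exist _ _ (BMact_in I S).

Definition BM : BStr A :=
  {| bs := BMcar; bz := BMzero; bj := BMjoin; bact := BMact |}.

End BM.

Arguments BM {A} M.

(* Main.v *)
Require Import Defs.
From Stdlib Require Import List PropExtensionality FunctionalExtensionality ProofIrrelevance IndefiniteDescription.
Import ListNotations.

Lemma sig_ext {T : Type} {P : T -> Prop} (x y : {t | P t}) :
  proj1_sig x = proj1_sig y -> x = y.
Proof.
  destruct x as [x Hx], y as [y Hy]; simpl; intros ->; f_equal; apply proof_irrelevance.
Qed.

Lemma pred_ext {T : Type} (P Q : T -> Prop) : (forall x, P x <-> Q x) -> P = Q.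
Proof.
  intro H; apply functional_extensionality; intro x; apply propositional_extensionality; apply H.
Qed.

Lemma BA_ext {A : F1Pair} (I J : BA A) : (forall a, I a <-> J a) -> I = J.
Proof.
  destruct I as [I HI], J as [J HJ]; simpl; intro H.
  assert (E : I = J) by (apply pred_ext; exact H). subst J; f_equal; apply proof_irrelevance.
Qed.

Lemma mul1r {A : F1Pair} (a : A) : F1mul a F1one = a.
Proof. rewrite F1mulC; apply F1mul1. Qed.

Definition Aplus {A : F1Pair} (a : A) : BA A :=
  {| baP := genA [a]; baFG := ex_intro _ [a] (fun _ => iff_refl _) |}.

Definition BAl {A : F1Pair} (k : list A) : BA A :=
  {| baP := genA k; baFG := ex_intro _ k (fun _ => iff_refl _) |}.

Section Gen.
Context {A : F1Pair} (M : POMod A).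

Lemma BM_ext (S T : BMcar A M) :
  (forall x, proj1_sig S x <-> proj1_sig T x) -> S = T.
Proof. intro H; apply sig_ext; apply pred_ext; exact H. Qed.

Lemma le0 (x : M) : ple M (Mpt M) x.
Proof.
  pose proof (ple_a A M x F1one F1zero) as H.
  rewrite Mact0, Mact1 in H. apply H.
  exists F1zero; split; [apply F1plus0 | symmetry; apply F1mul0].
Qed.

Lemma le_self (f : A) (x : M) : F1plus f -> ple M (Mact M f x) x.
Proof.
  intro Hf; pose proof (ple_a A M x F1one f) as H.
  rewrite Mact1 in H. apply H. exists f; split; [exact Hf | symmetry; apply mul1r].
Qed.

Lemma le_pt (x : M) : ple M x (Mpt M) -> x = Mpt M.
Proof. intro H; apply ple_antisym; [exact H | apply le0]. Qed.

Lemma E_gen (I : BA A) k (T : M -> Prop) (l : list M) :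
  (forall a, I a <-> genA k a) -> (forall x, T x <-> gen l x) ->
  forall x, (exists i y, I i /\ T y /\ x = Mact M i y) <->
       gen (flat_map (fun g => map (fun m => Mact M g m) l) k) x.
Proof.
 intros HI HT x; split.
 - intros [i [y [Hi [Hy ->]]]]. apply HI in Hi; apply HT in Hy.
   destruct Hi as [-> | [g [f [Hg [Hf ->]]]]].
   + left; apply Mact0.
   + destruct Hy as [-> | [h [f' [Hh [Hf' ->]]]]].
     * left; apply Mactpt.
     * right; exists (Mact M g h), (F1mul f f'); repeat split.
       -- apply in_flat_map; exists g; split; auto. apply in_map_iff; exists h; auto.
       -- apply F1plusM; auto.
       -- rewrite <- !MactM; f_equal. rewrite <- !F1mulA, (F1mulC g f'). reflexivity.
 - intros [-> | [w [f [Hw [Hf ->]]]]].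
   + exists F1zero, (Mpt M); repeat split.
     * apply HI; left; reflexivity.
     * apply HT; left; reflexivity.
     * symmetry; apply Mact0.
   + apply in_flat_map in Hw; destruct Hw as [g [Hg Hw]].
     apply in_map_iff in Hw; destruct Hw as [h [<- Hh]].
     exists (F1mul f g), h; repeat split.
     * apply HI; right; exists g, f; auto.
     * apply HT; right; exists h, F1one; repeat split; auto. apply F1plus1. symmetry; apply Mact1.
     * symmetry; apply MactM.
Qed.

Definition pt (x : M) : BMcar A M := exist _ (down (gen [x])) (inBM_down_gen A M [x]).

Lemma pt_act a x : BMact A M (Aplus a) (pt x) = pt (Mact M a x).
Proof.
  apply BM_ext; intro z; simpl; split.
  - intros [w [[i [y [Hi [[y' [Hy' Hyy']] ->]]]] Hzw]].
    destruct Hi as [-> | [g [f [[<- | []] [Hf ->]]]]].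
    + exists (Mpt M); split; [left; reflexivity|]. rewrite Mact0 in Hzw; exact Hzw.
    + destruct Hy' as [-> | [g' [f' [[<- | []] [Hf' ->]]]]].
      * exists (Mpt M); split; [left; reflexivity|].
        eapply ple_trans; [exact Hzw|]. rewrite <- (Mactpt M (F1mul f a)). apply ple_b; exact Hyy'.
      * exists (Mact M (F1mul f f') (Mact M a x)); split.
        -- right; exists (Mact M a x), (F1mul f f'); repeat split; auto. left; auto. apply F1plusM; auto.
        -- eapply ple_trans; [exact Hzw|].
           replace (Mact M (F1mul f f') (Mact M a x)) with (Mact M (F1mul f a) (Mact M f' x)).
           apply ple_b; exact Hyy'.
           rewrite <- !MactM; f_equal. rewrite <- !F1mulA, (F1mulC a f'). reflexivity.
  - intros [w [Hw Hzw]]. exists w; split; [|exact Hzw].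
    destruct Hw as [-> | [g [f [[<- | []] [Hf ->]]]]].
    + exists F1zero, x; repeat split.
      * left; reflexivity.
      * exists x; split; [right; exists x, F1one; repeat split; auto; [left; auto | apply F1plus1 | symmetry; apply Mact1] | apply ple_refl].
      * symmetry; apply Mact0.
    + exists (F1mul f a), x; repeat split.
      * right; exists a, f; repeat split; auto. left; auto.
      * exists x; split; [right; exists x, F1one; repeat split; auto; [left; auto | apply F1plus1 | symmetry; apply Mact1] | apply ple_refl].
      * symmetry; apply MactM.
Qed.

Lemma pt0 : BMzero A M = pt (Mpt M).
Proof.
  apply BM_ext; intro z; simpl; unfold down; split; intros [y [Hy Hzy]]; exists y; split; auto.
  - destruct Hy as [-> | [g [f [[] _]]]]. left; reflexivity.
  - destruct Hy as [-> | [g [f [[<- | []] [Hf ->]]]]]. left; reflexivity. left; apply Mactpt.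
Qed.

End Gen.
Section Qcons.
Context {A : F1Pair} (M : POMod A) (N : BMod A) (p : N -> BM M)
  (Hp : BMod_hom p) (Hsurj : forall y, exists x, p x = y).

Lemma Nact1 : forall x, bact N (BAone A) x = x.
Proof. destruct (bax _ N) as [_ [_ [_ [_ [_ [_ [H _]]]]]]]; exact H. Qed.
Lemma NactM : forall I J x, bact N (BAmul I J) x = bact N I (bact N J x).
Proof. destruct (bax _ N) as [_ [_ [_ [_ [_ [H _]]]]]]; exact H. Qed.
Lemma Nact0 : forall x, bact N (BAzero A) x = bz N.
Proof. destruct (bax _ N) as [_ [_ [_ [_ [_ [_ [_ [H _]]]]]]]]; exact H. Qed.
Lemma Nactz : forall I, bact N I (bz N) = bz N.
Proof. destruct (bax _ N) as [_ [_ [_ [_ [_ [_ [_ [_ H]]]]]]]]; exact H. Qed.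

Definition Qc := { q : (N * M)%type | p (fst q) = pt M (snd q) }.

Lemma Qpt_ok : p (bz N) = pt M (Mpt M).
Proof. transitivity (BMzero A M); [exact (proj1 Hp) | apply pt0]. Qed.

Definition Qpt : Qc := exist _ (bz N, Mpt M) Qpt_ok.

Lemma Qact_ok (a : A) (q : Qc) :
  p (bact N (Aplus a) (fst (proj1_sig q))) = pt M (Mact M a (snd (proj1_sig q))).
Proof.
  rewrite (proj2 (proj2 Hp)). destruct q as [[n x] H]; simpl in *. rewrite H. apply pt_act.
Qed.

Definition Qact (a : A) (q : Qc) : Qc :=
  exist _ (bact N (Aplus a) (fst (proj1_sig q)), Mact M a (snd (proj1_sig q))) (Qact_ok a q).

Lemma Aplus1 : Aplus (A:=A) F1one = BAone A.
Proof. apply BA_ext; intro; reflexivity. Qed.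

Lemma AplusM (a b : A) : Aplus (F1mul a b) = BAmul (Aplus a) (Aplus b).
Proof.
  apply BA_ext; intro c; simpl; split.
  - intros [-> | [g [f [[<- | []] [Hf ->]]]]].
    + exists F1zero, F1zero; repeat split; try (left; reflexivity). symmetry; apply F1mul0.
    + exists (F1mul f a), (F1mul F1one b); repeat split.
      * right; exists a, f; repeat split; auto. left; auto.
      * right; exists b, F1one; repeat split; auto. left; auto. apply F1plus1.
      * rewrite F1mul1, F1mulA; reflexivity.
  - intros [i [j [Hi [Hj ->]]]].
    destruct Hi as [-> | [g [f [[<- | []] [Hf ->]]]]].
    + left; apply F1mul0.
    + destruct Hj as [-> | [g' [f' [[<- | []] [Hf' ->]]]]].
      * left; rewrite F1mulC; apply F1mul0.
      * right; exists (F1mul a b), (F1mul f f'); repeat split; [left; auto | apply F1plusM; auto |].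
        rewrite <- !F1mulA; f_equal. rewrite !F1mulA, (F1mulC a f'); reflexivity.
Qed.

Lemma Aplus0 : Aplus (A:=A) F1zero = BAzero A.
Proof.
  apply BA_ext; intro c; simpl; split.
  - intros [-> | [g [f [[<- | []] [Hf ->]]]]]; left; [reflexivity|]. rewrite F1mulC; apply F1mul0.
  - intros [-> | [g [f [[] _]]]]. left; reflexivity.
Qed.

Lemma Qact1 q : Qact F1one q = q.
Proof.
  apply sig_ext; destruct q as [[n x] H]; simpl. rewrite Aplus1, Nact1, Mact1; reflexivity.
Qed.

Lemma QactM a b q : Qact (F1mul a b) q = Qact a (Qact b q).
Proof.
  apply sig_ext; destruct q as [[n x] H]; simpl. rewrite AplusM, NactM, MactM; reflexivity.
Qed.

Lemma Qact0 q : Qact F1zero q = Qpt.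
Proof.
  apply sig_ext; destruct q as [[n x] H]; simpl. rewrite Aplus0, Nact0, Mact0; reflexivity.
Qed.

Lemma Qactpt a : Qact a Qpt = Qpt.
Proof.
  apply sig_ext; simpl. rewrite Nactz, Mactpt; reflexivity.
Qed.

Definition Q : AMod A :=
  {| Mc := Qc; Mpt := Qpt; Mact := Qact; Mact1 := Qact1; MactM := QactM;
     Mact0 := Qact0; Mactpt := Qactpt |}.

Lemma lift_t : AMod_projective (pmod M) ->
  exists t : M -> N, (forall x, p (t x) = pt M x) /\ t (Mpt M) = bz N /\
     (forall a x, t (Mact M a x) = bact N (Aplus a) (t x)).
Proof.
  intro HPM.
  destruct (HPM Q (fun q : Q => snd (proj1_sig q))) as [sg [[Hs0 Hs1] Hs]].
  - split; [reflexivity | intros; reflexivity].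
  - intro m. destruct (Hsurj (pt M m)) as [n Hn]. exists (exist _ (n, m) Hn : Q); reflexivity.
  - exists (fun x => fst (proj1_sig (sg x))); repeat split.
    + intro x. transitivity (pt M (snd (proj1_sig (sg x)))); [exact (proj2_sig (sg x)) | f_equal; apply Hs].
    + simpl. rewrite Hs0. reflexivity.
    + intros a x. rewrite Hs1. reflexivity.
Qed.
End Qcons.
Section Back.
Context {A : F1Pair} (M : POMod A) (N : BMod A) (p : N -> BM M)
  (Hp : BMod_hom p) (t : M -> N)
  (T1 : forall x, p (t x) = pt M x) (T2 : t (Mpt M) = bz N)
  (T3 : forall a x, t (Mact M a x) = bact N (Aplus a) (t x))
  (Hi : lower_finite M) (Hii : lower_saturated M).

Lemma Nassoc : forall x y z, bj N x (bj N y z) = bj N (bj N x y) z.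
Proof. destruct (bax _ N) as [H _]; exact H. Qed.
Lemma Ncomm : forall x y, bj N x y = bj N y x.
Proof. destruct (bax _ N) as [_ [H _]]; exact H. Qed.
Lemma Nzero : forall x, bj N (bz N) x = x.
Proof. destruct (bax _ N) as [_ [_ [H _]]]; exact H. Qed.
Lemma NactJ : forall I J x, bact N (BAjoin I J) x = bj N (bact N I x) (bact N J x).
Proof. destruct (bax _ N) as [_ [_ [_ [H _]]]]; exact H. Qed.
Lemma NactD : forall I x y, bact N I (bj N x y) = bj N (bact N I x) (bact N I y).
Proof. destruct (bax _ N) as [_ [_ [_ [_ [H _]]]]]; exact H. Qed.

Definition leN (x y : N) := bj N x y = y.

Lemma Nidem x : bj N x x = x.
Proof.
  transitivity (bact N (BAjoin (BAone A) (BAone A)) x).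
  - rewrite NactJ, (Nact1 N); reflexivity.
  - replace (BAjoin (BAone A) (BAone A)) with (BAone A) by (apply BA_ext; intro; simpl; tauto).
    apply Nact1.
Qed.

Lemma act_le f x : F1plus f -> leN (bact N (Aplus f) x) x.
Proof.
  intro Hf; unfold leN.
  transitivity (bact N (BAjoin (Aplus f) (BAone A)) x).
  - rewrite NactJ, (Nact1 N); reflexivity.
  - replace (BAjoin (Aplus f) (BAone A)) with (BAone A). apply Nact1.
    apply BA_ext; intro c; simpl; split; [tauto|].
    intros [[-> | [g [f' [[<- | []] [Hf' ->]]]]] | H]; [left; reflexivity | | exact H].
    right; exists F1one, (F1mul f' f); repeat split; [left; auto | apply F1plusM; auto | ].
    symmetry; apply mul1r.
Qed.

Lemma leN_trans x y z : leN x y -> leN y z -> leN x z.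
Proof. unfold leN; intros H1 H2. rewrite <- H2, Nassoc, H1; reflexivity. Qed.

Lemma leN_join x y z : leN x z -> leN y z -> leN (bj N x y) z.
Proof. unfold leN; intros H1 H2. rewrite <- Nassoc, H2, H1; reflexivity. Qed.

Lemma leN_antisym x y : leN x y -> leN y x -> x = y.
Proof. unfold leN; intros H1 H2. rewrite <- H1, <- H2 at 1. rewrite Ncomm; reflexivity. Qed.

Definition jl (l : list M) : N := fold_right (fun g acc => bj N (t g) acc) (bz N) l.

Lemma jl_in l g : In g l -> leN (t g) (jl l).
Proof.
  induction l as [|h l IH]; simpl; [tauto|]. unfold leN in *.
  intros [-> | Hin].
  - rewrite Nassoc, Nidem; reflexivity.
  - rewrite Nassoc, (Ncomm (t g) (t h)), <- Nassoc, IH; auto.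
Qed.

Lemma gen_le l l' : (forall x, gen l x -> gen l' x) -> leN (jl l) (jl l').
Proof.
  induction l as [|g l IH]; intro H; simpl.
  - apply Nzero.
  - apply leN_join.
    + assert (Hg : gen l' g).
      { apply H; right; exists g, F1one; repeat split; [left; auto | apply F1plus1 | symmetry; apply Mact1]. }
      destruct Hg as [-> | [h [f [Hh [Hf ->]]]]].
      * rewrite T2; apply Nzero.
      * rewrite T3. eapply leN_trans; [apply act_le; exact Hf | apply jl_in; exact Hh].
    + apply IH; intros x Hx; apply H.
      destruct Hx as [-> | [h [f [Hh [Hf ->]]]]]; [left; reflexivity | right; exists h, f; simpl; auto].
Qed.

Lemma gen_eq l l' : (forall x, gen l x <-> gen l' x) -> jl l = jl l'.
Proof. intro H; apply leN_antisym; apply gen_le; intro x; apply H. Qed.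

Lemma jl_app l1 l2 : jl (l1 ++ l2) = bj N (jl l1) (jl l2).
Proof.
  induction l1 as [|g l1 IH]; simpl.
  - symmetry; apply Nzero.
  - rewrite IH, Nassoc; reflexivity.
Qed.

Lemma act_jl a l : bact N (Aplus a) (jl l) = jl (map (fun m => Mact M a m) l).
Proof.
  induction l as [|g l IH]; simpl.
  - apply Nactz.
  - rewrite NactD, IH, T3; reflexivity.
Qed.

Lemma actI (k : list A) : forall I : BA A, (forall a, I a <-> genA k a) -> forall l : list M,
  bact N I (jl l) = jl (flat_map (fun g => map (fun m => Mact M g m) l) k).
Proof.
  induction k as [|g k IH]; intros I HI l; simpl.
  - replace I with (BAzero A) by (apply BA_ext; intro a; rewrite HI; reflexivity).
    apply Nact0.
  - replace I with (BAjoin (Aplus g) (BAl k)).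
    + rewrite NactJ, act_jl, (IH (BAl k)), jl_app; [reflexivity | intro; reflexivity].
    + apply BA_ext; intro a; rewrite HI; simpl.
      change (g :: k) with ([g] ++ k); rewrite genA_app; reflexivity.
Qed.

Lemma p_jl l x : proj1_sig (p (jl l)) x <-> down (gen l) x.
Proof.
  revert x; induction l as [|g l IH]; intro x; simpl.
  - rewrite (proj1 Hp); simpl; reflexivity.
  - rewrite (proj1 (proj2 Hp)); simpl. rewrite T1, IH; simpl.
    unfold down; split.
    + intros [[y [Hy Hle]] | [y [Hy Hle]]]; exists y; split; auto.
      * destruct Hy as [-> | [h [f [[<- | []] [Hf ->]]]]]; [left; auto | right; exists g, f; simpl; auto].
      * destruct Hy as [-> | [h [f [Hh [Hf ->]]]]]; [left; auto | right; exists h, f; simpl; auto].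
    + intros [y [[-> | [h [f [[<- | Hh] [Hf ->]]]]] Hle]].
      * left; exists (Mpt M); split; auto; left; auto.
      * left; exists (Mact M f g); split; auto; right; exists g, f; simpl; auto.
      * right; exists (Mact M f h); split; auto; right; exists h, f; simpl; auto.
Qed.

Lemma ex_l (S : BMcar A M) : exists l, forall x, proj1_sig S x <-> gen l x.
Proof.
  destruct S as [S0 [H0 [H1 [T [HT HS]]]]]; destruct (Hi T HT) as [l Hl].
  exists l; intro x; simpl; rewrite HS; apply Hl.
Qed.

Definition lS (S : BMcar A M) : list M := proj1_sig (constructive_indefinite_description _ (ex_l S)).

Lemma lS_spec S x : proj1_sig S x <-> gen (lS S) x.
Proof. unfold lS; destruct (constructive_indefinite_description _ (ex_l S)) as [l Hl]; apply Hl. Qed.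

Definition sfun (S : BMcar A M) : N := jl (lS S).

Lemma s_spec S l : (forall x, proj1_sig S x <-> gen l x) -> sfun S = jl l.
Proof. intro H; apply gen_eq; intro x; rewrite <- H; symmetry; apply lS_spec. Qed.

Lemma down_self (S : BMcar A M) x : down (proj1_sig S) x <-> proj1_sig S x.
Proof.
  destruct S as [S0 [H0 [HL H2]]]; simpl; split.
  - intros [y [Hy Hle]]; exact (HL x y Hle Hy).
  - intro H; exists x; split; [exact H | apply ple_refl].
Qed.

Lemma sfun_sec S : p (sfun S) = S.
Proof.
  apply BM_ext; intro x; unfold sfun. rewrite p_jl, <- down_self.
  unfold down; setoid_rewrite lS_spec; reflexivity.
Qed.

Lemma s_zero : sfun (BMzero A M) = bz N.
Proof.
  rewrite (s_spec _ nil); [reflexivity|]. intro x; simpl; split.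
  - intros [y [[-> | [g [f [[] _]]]] Hle]]. left; apply le_pt; exact Hle.
  - intros [-> | [g [f [[] _]]]]. exists (Mpt M); split; [left; auto | apply ple_refl].
Qed.

Lemma s_join S T : sfun (BMjoin A M S T) = bj N (sfun S) (sfun T).
Proof.
  rewrite (s_spec _ (lS S ++ lS T)); [apply jl_app|].
  intro x; simpl; rewrite gen_app, !lS_spec; reflexivity.
Qed.

Lemma s_act I S : sfun (BMact A M I S) = bact N I (sfun S).
Proof.
  destruct (baFG I) as [k Hk].
  unfold sfun at 2. rewrite (actI k I Hk).
  apply s_spec. intro x.
  rewrite <- (E_gen M I k (proj1_sig S) (lS S) Hk (lS_spec S)). simpl.
  split; [|intro H; exists x; split; [exact H | apply ple_refl]].
  intros [z [[i [y [Hi0 [Hy ->]]]] Hle]].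
  destruct (proj2_sig S) as [[HS0 HS1] [HSL _]].
  apply Hk in Hi0; destruct Hi0 as [-> | [g [f [Hg [Hf ->]]]]].
  - rewrite Mact0 in Hle. apply le_pt in Hle; subst x.
    exists F1zero, (Mpt M); repeat split; auto; [apply Hk; left; auto | symmetry; apply Mact0].
  - destruct (Hii (proj1_sig S) (conj HS0 HS1) HSL g x (Mact M (F1mul f g) y) Hle) as [y' [Hy' ->]].
    + exists (Mact M f y); split; [apply HS1; auto|]. rewrite F1mulC, MactM; reflexivity.
    + exists g, y'; repeat split; auto. apply Hk; right; exists g, F1one; repeat split; auto.
      apply F1plus1. symmetry; apply F1mul1.
Qed.

Lemma back_section : exists s : BM M -> N, BMod_hom s /\ forall y, p (s y) = y.
Proof.
  exists sfun; split; [split; [apply s_zero | split; [apply s_join | apply s_act]] | apply sfun_sec].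
Qed.
End Back.
Section Fwd.
Context {A : F1Pair} (M : POMod A).

Definition FMc := { T : M -> Prop | fgsub (M := pmod M) T }.

Lemma FM_ext (S T : FMc) : (forall x, proj1_sig S x <-> proj1_sig T x) -> S = T.
Proof. intro H; apply sig_ext; apply pred_ext; exact H. Qed.

Lemma fg0 (T : FMc) : proj1_sig T (Mpt M).
Proof. destruct T as [T [l Hl]]; simpl; apply Hl; left; reflexivity. Qed.

Definition FMzero : FMc := exist _ (gen nil) (ex_intro _ nil (fun _ => iff_refl _)).

Lemma FMjoin_ok (S T : FMc) : fgsub (M := pmod M) (fun x => proj1_sig S x \/ proj1_sig T x).
Proof.
  destruct S as [S [l1 H1]], T as [T [l2 H2]]; exists (l1 ++ l2); intro x; simpl.
  rewrite gen_app, H1, H2; reflexivity.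
Qed.

Definition FMjoin (S T : FMc) : FMc := exist _ _ (FMjoin_ok S T).

Lemma FMact_ok (I : BA A) (T : FMc) :
  fgsub (M := pmod M) (fun x => exists i y, I i /\ proj1_sig T y /\ x = Mact M i y).
Proof.
  destruct (baFG I) as [k Hk]; destruct T as [T [l Hl]]; simpl.
  eexists; exact (E_gen M I k T l Hk Hl).
Qed.

Definition FMact (I : BA A) (T : FMc) : FMc := exist _ _ (FMact_ok I T).

Definition FMstr : BStr A := {| bs := FMc; bz := FMzero; bj := FMjoin; bact := FMact |}.

Lemma FMax : BModAx FMstr.
Proof.
  unfold BModAx; simpl; repeat split.
  - intros; apply FM_ext; intro; simpl; tauto.
  - intros; apply FM_ext; intro; simpl; tauto.
  - intros T; apply FM_ext; intro x; simpl; split; [|tauto].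
    intros [[-> | [g [f [[] _]]]] | H]; [apply fg0 | exact H].
  - intros; apply FM_ext; intro; simpl; firstorder.
  - intros; apply FM_ext; intro; simpl; firstorder.
  - intros I J T; apply FM_ext; intro x; simpl; split.
    + intros [c [y [[i [j [Hi [Hj ->]]]] [Hy ->]]]].
      exists i, (Mact M j y); repeat split; auto. exists j, y; auto. apply MactM.
    + intros [i [z [Hi [[j [y [Hj [Hy ->]]]] ->]]]].
      exists (F1mul i j), y; repeat split; auto. exists i, j; auto. symmetry; apply MactM.
  - intros T; apply FM_ext; intro x; simpl; split.
    + intros [i [y [[-> | [g [f [[<- | []] [Hf ->]]]]] [Hy ->]]]].
      * rewrite Mact0; apply fg0.
      * rewrite mul1r. destruct T as [T [l Hl]]; simpl in *.
        apply Hl in Hy; apply Hl.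
        destruct Hy as [-> | [h [f' [Hh [Hf' ->]]]]]; [left; apply Mactpt|].
        right; exists h, (F1mul f f'); repeat split; auto; [apply F1plusM; auto | symmetry; apply MactM].
    + intro H; exists F1one, x; repeat split; auto; [| symmetry; apply Mact1].
      right; exists F1one, F1one; repeat split; [left; auto | apply F1plus1 | symmetry; apply F1mul1].
  - intros T; apply FM_ext; intro x; simpl; split.
    + intros [i [y [[-> | [g [f [[] _]]]] [Hy ->]]]]. left; apply Mact0.
    + intros [-> | [g [f [[] _]]]]. exists F1zero, (Mpt M); repeat split; [left; auto | apply fg0 | symmetry; apply Mact0].
  - intros I; apply FM_ext; intro x; simpl; split.
    + intros [i [y [Hi [[-> | [g [f [[] _]]]] ->]]]]. left; apply Mactpt.
    + intros [-> | [g [f [[] _]]]]. exists F1zero, (Mpt M); repeat split; [| left; auto | symmetry; apply Mact0].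
      destruct (baFG I) as [k Hk]; apply Hk; left; auto.
Qed.

Definition FM : BMod A := {| bstr := FMstr; bax := FMax |}.

Lemma pfun_ok (T : FMc) : inBM (M := M) (down (proj1_sig T)).
Proof.
  destruct T as [T [l Hl]]; simpl.
  apply (inBM_ext A M (down (gen l))); [|apply inBM_down_gen].
  intro x; unfold down; split; intros [y [Hy Hle]]; exists y; split; auto; apply Hl; auto.
Qed.

Definition pfun (T : FMc) : BMcar A M := exist _ _ (pfun_ok T).

Lemma pfun_hom : BMod_hom (N := FMstr) (P := BM M) pfun.
Proof.
  split; [|split].
  - apply BM_ext; intro; simpl; reflexivity.
  - intros S T; apply BM_ext; intro x; simpl; unfold down; firstorder.
  - intros I T; apply BM_ext; intro x; simpl; split.
    + intros [z [[i [y [Hi [Hy ->]]]] Hle]].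
      exists (Mact M i y); split; auto. exists i, y; repeat split; auto.
      exists y; split; auto; apply ple_refl.
    + intros [z [[i [y [Hi [[y' [Hy' Hyy']] ->]]]] Hle]].
      exists (Mact M i y'); split; [exists i, y'; auto|].
      eapply ple_trans; [exact Hle | apply ple_b; exact Hyy'].
Qed.

Lemma forward : BMod_projective (BM M) -> lower_finite M /\ lower_saturated M.
Proof.
  intro HP.
  destruct (HP FM pfun pfun_hom) as [s [[Hs0 [Hsj Hsa]] Hps]].
  { intro S. destruct (inBM_repr A M (proj1_sig S) (proj2_sig S)) as [l Hl].
    exists (exist _ (gen l) (ex_intro _ l (fun _ => iff_refl _)) : FMc).
    apply BM_ext; intro x; simpl; rewrite Hl; reflexivity. }
  assert (Key : forall S x, proj1_sig (s S : FMc) x <-> proj1_sig S x).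
  { intros S x; split.
    - intro H. rewrite <- (Hps S). simpl. exists x; split; [exact H | apply ple_refl].
    - intro HxS.
      destruct (proj2_sig S) as [[HS0 HS1] [HSL _]].
      assert (E : BMjoin A M (pt M x) S = S).
      { apply BM_ext; intro z; simpl; split; [|tauto].
        intros [[w [Hw Hzw]] | H]; [|exact H].
        apply (HSL z w Hzw). destruct Hw as [-> | [g [f [[<- | []] [Hf ->]]]]]; auto. }
      assert (Hsub : forall z, proj1_sig (s (pt M x) : FMc) z -> proj1_sig (s S : FMc) z).
      { intros z Hz. assert (HJ : s (BMjoin A M (pt M x) S) = FMjoin (s (pt M x)) (s S)) by exact (Hsj (pt M x) S). rewrite <- E, HJ. simpl. left; exact Hz. }
      assert (Hx : proj1_sig (pfun (s (pt M x))) x).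
      { rewrite Hps. simpl. exists x; split; [|apply ple_refl].
        right; exists x, F1one; repeat split; [left; auto | apply F1plus1 | symmetry; apply Mact1]. }
      destruct Hx as [y [Hy Hxy]].
      assert (Hy2 : proj1_sig (pfun (s (pt M x))) y) by (simpl; exists y; split; [exact Hy | apply ple_refl]).
      rewrite Hps in Hy2. destruct Hy2 as [w [Hw Hyw]].
      destruct Hw as [-> | [g [f [[<- | []] [Hf ->]]]]].
      + assert (x = Mpt M) by (apply le_pt; eapply ple_trans; eassumption). subst x. apply fg0.
      + assert (y = x).
        { apply ple_antisym; [|exact Hxy]. eapply ple_trans; [exact Hyw | apply le_self; exact Hf]. }
        subst y. apply Hsub; exact Hy. }
  split.
  - intros T HT.
    assert (HB : inBM (M := M) (down T)).
    { destruct HT as [l Hl]. apply (inBM_ext A M (down (gen l))); [|apply inBM_down_gen].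
      intro x; unfold down; split; intros [y [Hy Hle]]; exists y; split; auto; apply Hl; auto. }
    destruct (proj2_sig (s (exist _ (down T) HB) : FMc)) as [l Hl].
    exists l; intro x. rewrite <- Hl, Key. reflexivity.
  - intros D [HD0 HD1] HDL f x z Hxz [y [Hy ->]].
    pose (R := BMact A M (Aplus f) (pt M y)).
    assert (HR : proj1_sig R x).
    { simpl. exists (Mact M f y); split; [|exact Hxz].
      exists f, y; repeat split.
      - right; exists f, F1one; repeat split; [left; auto | apply F1plus1 | symmetry; apply F1mul1].
      - exists y; split; [|apply ple_refl].
        right; exists y, F1one; repeat split; [left; auto | apply F1plus1 | symmetry; apply Mact1]. }
    rewrite <- Key in HR. unfold R in HR.
    assert (HJ : s (BMact A M (Aplus f) (pt M y)) = FMact (Aplus f) (s (pt M y))) by exact (Hsa _ _).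
    rewrite HJ in HR.
    simpl in HR. destruct HR as [i [w [Hi [Hw ->]]]].
    rewrite Key in Hw. simpl in Hw. destruct Hw as [w' [Hw' Hww']].
    assert (HwD : D w).
    { apply (HDL w w' Hww'). destruct Hw' as [-> | [g [h [[<- | []] [Hh ->]]]]]; auto. }
    destruct Hi as [-> | [g [h [[<- | []] [Hh ->]]]]].
    + exists (Mpt M); split; auto. rewrite Mact0, Mactpt; reflexivity.
    + exists (Mact M h w); split; auto. rewrite F1mulC, MactM; reflexivity.
Qed.
End Fwd.

Theorem mainTheorem13 (A : F1Pair) (M : POMod A) :
  AMod_projective (pmod M) ->
  (BMod_projective (BM M) <-> lower_finite M /\ lower_saturated M).
Proof.
  intro HPM; split; [apply forward|].
  intros [Hi Hii] N p Hp Hsurj.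
  destruct (lift_t M N p Hp Hsurj HPM) as [t [T1 [T2 T3]]].
  exact (back_section M N p Hp t T1 T2 T3 Hi Hii).
Qed.
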